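(* Let $q$ be a prime power and let $l$ be an odd prime coprime to $q$. Then either every monic irreducible factor of $x^{l}-1$ in $\mathbb{F}_{q^2}[x]$ is SCRIM, or $x-1$ is the only SCRIM factor of $x^{l}-1$ in $\mathbb{F}_{q^2}[x]$.
   Context: $\mathbb{F}_{q^2}$ is the finite field with $q^2$ elements. For $\alpha\in\mathbb{F}_{q^2}$ put $\bar\alpha=\alpha^q$, and for $f(x)=\sum_i f_ix^i$ put $\overline{f(x)}=\sum_i \bar f_i x^i$. For $f(x)$ with $f(0)\neq 0$, $f^*(x)=x^{\deg f}f(0)^{-1}f(1/x)$ and $f^\dagger(x)=\overline{f^*(x)}$. A polynomial is SCRIM if it is monic, irreducible over $\mathbb{F}_{q^2}$, has nonzero constant term, and satisfies $f=f^\dagger$. A SCRIM factor of $x^n-1$ is a SCRIM polynomial dividing $x^n-1$ in $\mathbb{F}_{q^2}[x]$. *)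

(* Defs.v *)
From HB Require Import structures.
From mathcomp Require Import all_boot all_order all_algebra.
Set Implicit Arguments. Unset Strict Implicit. Unset Printing Implicit Defensive.
Import GRing.Theory.
Local Open Scope ring_scope.

(* F plays the role of F_{q^2}; conjugation is a |-> a^q. *)

Definition conj_poly (F : finFieldType) (q : nat) (f : {poly F}) : {poly F} :=
  map_poly (fun a : F => a ^+ q) f.

(* fstar(x) = x^{deg f} f(0)^{-1} f(1/x): coefficient j is f(0)^{-1} f_{deg f - j} *)
Definition recip_poly (F : finFieldType) (f : {poly F}) : {poly F} :=
  (f`_0)^-1 *: \poly_(j < size f) f`_((size f).-1 - j).

Definition dagger_poly (F : finFieldType) (q : nat) (f : {poly F}) : {poly F} :=
  conj_poly q (recip_poly f).

Definition SCRIM (F : finFieldType) (q : nat) (f : {poly F}) : Prop :=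
  [/\ f \is monic, irreducible_poly f, f`_0 != 0 & f = dagger_poly q f].

(* Main.v *)
Require Import Defs.
From HB Require Import structures.
From mathcomp Require Import all_boot all_order all_algebra.
From mathcomp Require Import qfpoly finfield cyclic zify.
From Stdlib Require Import Classical.
Set Implicit Arguments. Unset Strict Implicit. Unset Printing Implicit Defensive.
Import GRing.Theory.
Local Open Scope ring_scope.

Section Frob.
Variables (L : fieldType) (p e : nat).
Definition frob (_ : p \in [pchar L]) (x : L) := x ^+ (p ^ e)%N.
Hypothesis hp : p \in [pchar L].
Lemma frob_nat : [pchar L].-nat (p ^ e)%N.
Proof.
rewrite (eq_pnat _ (pcharf_eq hp)) pnatX pnat_id ?orbT //.
exact: pcharf_prime hp.
Qed.
Lemma frob_zmod : zmod_morphism (frob hp).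
Proof. by move=> x y; rewrite /frob exprDn_pchar ?frob_nat // exprNn_pchar ?frob_nat. Qed.
Lemma frob_mon : monoid_morphism (frob hp).
Proof. by split=> [|x y]; rewrite /frob ?expr1n ?exprMn. Qed.
HB.instance Definition _ := GRing.isZmodMorphism.Build L L (frob hp) frob_zmod.
HB.instance Definition _ := GRing.isMonoidMorphism.Build L L (frob hp) frob_mon.
End Frob.

Section Abs.
Variables (F : finFieldType) (p k : nat).
Hypotheses (pp : prime p) (k0 : (0 < k)%N) (cardF : #|F| = ((p ^ k) ^ 2)%N).

Lemma hpF : p \in [pchar F].
Proof. by apply: (@card_finPcharP F p (k * 2)) => //; rewrite cardF expnM. Qed.

Lemma expF (a : F) j : a ^+ (((p ^ k) ^ 2) ^ j)%N = a.
Proof.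
elim: j => [|j IH]; first by rewrite expn0 expr1.
have ha : a ^+ ((p ^ k) ^ 2)%N = a by rewrite -cardF expf_card.
by rewrite expnS exprM ha IH.
Qed.

Lemma frobF_id j (f : {poly F}) : map_poly (frob (k * 2 * j) hpF) f = f.
Proof.
by apply: map_poly_id => a _; rewrite /frob !expnM expF.
Qed.

Lemma q_gt1 : (1 < p ^ k)%N.
Proof. by rewrite -{1}(expn0 p) ltn_exp2l // prime_gt1. Qed.

Section WithL.
Variables (L : fieldType) (io : {rmorphism F -> L}).
Lemma hpL : p \in [pchar L].
Proof. exact: rmorph_pchar hpF. Qed.
Local Notation "f ^i" := (map_poly io f) (at level 2).

Lemma root_frob e (f : {poly F}) b :
  root f^i b -> root (map_poly (frob e hpF) f)^i (b ^+ (p ^ e)%N).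
Proof.
move=> /rootP fb; apply/rootP.
have -> : (map_poly (frob e hpF) f)^i = map_poly (frob e hpL) f^i.
  by rewrite -!map_poly_comp; apply: eq_map_poly => a /=; rewrite /frob rmorphXn.
rewrite -[b ^+ _]/(frob e hpL b) horner_map fb.
change (frob e hpL 0 = 0); rewrite /frob expr0n expn_eq0 eqn0Ngt prime_gt0 //.
Qed.

Lemma root_frobj j (f : {poly F}) b :
  root f^i b -> root f^i (b ^+ (((p ^ k) ^ 2) ^ j)%N).
Proof. by move/(root_frob (k * 2 * j)); rewrite frobF_id !expnM. Qed.

Lemma recip_root (f : {poly F}) b : f`_0 != 0 -> b != 0 -> root f^i b ->
  root (recip_poly f)^i b^-1.
Proof.
move=> f0 b0 /rootP fb; apply/rootP.
rewrite /recip_poly map_polyZ hornerZ.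
set n := size f.
have -> : map_poly io (\poly_(j < n) f`_(n.-1 - j)) =
          \poly_(j < n) io f`_(n.-1 - j).
  by apply/polyP => i; rewrite coef_map !coef_poly; case: ifP => _ //; apply: rmorph0.
rewrite horner_poly.
suff: b ^+ n.-1 * \sum_(i < n) io f`_(n.-1 - i) * b^-1 ^+ i = 0.
  by move/eqP; rewrite mulf_eq0 expf_eq0 (negbTE b0) andbF /= => /eqP->; rewrite mulr0.
rewrite mulr_sumr -[RHS]fb horner_coef size_map_poly -/n.
rewrite [RHS](reindex_inj rev_ord_inj) /=; apply: eq_bigr => i _.
have hi := ltn_ord i.
have e1 : (n - i.+1 = n.-1 - i)%N by lia.
rewrite coef_map e1 mulrCA; congr (_ * _).
have -> : n.-1 = (n.-1 - i + i)%N by lia.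
rewrite exprD -mulrA exprVn mulfV ?mulr1 ?expf_neq0 //; congr (_ ^+ _); lia.
Qed.

Lemma dagger_root (f : {poly F}) b : f`_0 != 0 -> b != 0 -> root f^i b ->
  root (dagger_poly (p ^ k) f)^i (b^-1 ^+ (p ^ k)%N).
Proof.
move=> f0 b0 fb; have := root_frob k (recip_root f0 b0 fb).
by [].
Qed.

Lemma common_root_dvd (f g : {poly F}) b : irreducible_poly f ->
  root f^i b -> root g^i b -> f %| g.
Proof.
move=> fI fb gb; apply: contraT => nd.
rewrite -irreducible_poly_coprime // -(coprimep_map io) in nd.
by have := coprimep_root nd fb; rewrite -rootE gb.
Qed.

Lemma descent (c : L) : c ^+ ((p ^ k) ^ 2)%N = c -> exists a, c = io a.
Proof.
move=> hc; have [a /eqP Ha|nH] := pickP (fun a => io a == c).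
  by exists a.
exfalso.
set n := ((p ^ k) ^ 2)%N in hc.
have n1 : (1 < n)%N by have := q_gt1; rewrite /n; nia.
pose P : {poly L} := 'X^n - 'X.
have sP : size P = n.+1.
  by rewrite /P size_polyDl ?size_polyXn // size_polyN size_polyX ltnS.
suff : (size (c :: map io (enum F)) < size P)%N.
  by rewrite /= size_map -cardE cardF sP ltnn.
apply: max_poly_roots; first by rewrite -size_poly_eq0 sP.
  apply/andP; split; first by rewrite /root !hornerE hc subrr.
  apply/allP => x /mapP [a _ ->].
  by rewrite /root !hornerE -rmorphXn /n -cardF expf_card subrr.
rewrite cons_uniq map_inj_uniq ?enum_uniq ?andbT; last exact: fmorph_inj.
by apply/mapP => -[a _ ea]; have := nH a; rewrite ea eqxx.
Qed.

Lemma descent_poly (P : {poly L}) :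
  (forall i, P`_i ^+ ((p ^ k) ^ 2)%N = P`_i) -> exists g, P = g^i.
Proof.
move=> H.
have E i : exists a, P`_i == io a by have [a ->] := descent (H i); exists a.
exists (\poly_(i < size P) xchoose (E i)).
apply/polyP => i; rewrite coef_map coef_poly; case: ltnP => hi.
  exact/eqP/(xchooseP (E i)).
by rewrite nth_default //; apply/esym/rmorph0.
Qed.


Lemma orbit_poly (l : nat) (a : L) : prime l -> coprime l (p ^ k) ->
  a ^+ l = 1 -> exists h : {poly F}, root h^i a /\
  forall g, root h^i g -> exists j, g = a ^+ (((p ^ k) ^ 2) ^ j)%N.
Proof.
move=> lp lq al.
set r := ((p ^ k) ^ 2)%N.
have l1 := prime_gt1 lp.
have [M eM] : exists M, l.-1 = M.+1 by exists l.-2; lia.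
pose s := [seq a ^+ (r ^ j)%N | j <- iota 0 l.-1].
pose H := \prod_(b <- s) ('X - b%:P).
have Fr x : frob (k * 2) hpL x = x ^+ r by rewrite /frob /r expnM.
have ferm : a ^+ (r ^ l.-1)%N = a.
  rewrite -(expr_mod _ al) -(totient_prime lp).
  have cr : coprime r l by rewrite coprime_sym /r coprimeXr.
  by rewrite Euler_exp_totient // modn_small // expr1.
have Hs : map (frob (k * 2) hpL) s = rot 1 s.
  rewrite /s eM -map_comp.
  have -> : [seq (frob (k * 2) hpL \o (fun j => a ^+ (r ^ j)%N)) j | j <- iota 0 M.+1]
          = [seq a ^+ (r ^ j)%N | j <- iota 1 M.+1].
    rewrite (iotaDl 1 0) -map_comp; apply: eq_map => j /=.
    by rewrite Fr -exprM -expnSr.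
  have -> : iota 1 M.+1 = iota 1 M ++ [:: M.+1] by rewrite -[M.+1]addn1 iotaD addnC.
  rewrite map_cat cats1 -eM ferm.
  by rewrite eM /= rot1_cons expn0 expr1.
have HH : map_poly (frob (k * 2) hpL) H = H.
  rewrite rmorph_prod (eq_bigr _ (fun b _ => map_polyXsubC _ b)).
  rewrite -(big_map (frob (k * 2) hpL) xpredT (fun b => 'X - b%:P)) Hs.
  by apply: perm_big; rewrite perm_rot.
have [g Hg] : exists g, H = g^i.
  apply: descent_poly => i.
  by have := congr1 (fun P : {poly L} => P`_i) HH; rewrite coef_map /= Fr.
exists g; rewrite -Hg; split.
  by rewrite root_prod_XsubC /s eM /= inE expn0 expr1 eqxx.
by move=> x; rewrite root_prod_XsubC => /mapP [j _ ->]; exists j.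
Qed.

End WithL.

Lemma size_dagger (f : {poly F}) : f \is monic -> f`_0 != 0 ->
  size (dagger_poly (p ^ k) f) = size f /\ dagger_poly (p ^ k) f \is monic.
Proof.
move=> fm f0.
have sf : (0 < size f)%N by rewrite size_poly_gt0 monic_neq0.
have E : (fun j => f`_((size f).-1 - j)) (size f).-1 != 0 by rewrite /= subnn.
have -> : dagger_poly (p ^ k) f = map_poly (frob k hpF) (recip_poly f) by [].
rewrite size_map_poly map_monic /recip_poly size_scale ?invr_eq0 // size_poly_eq //.
by split=> //; rewrite monicE lead_coefZ lead_coef_poly //= subnn mulVf.
Qed.

Lemma ext_root (f : {poly F}) : irreducible_poly f -> f \is monic ->
  exists (L : fieldType) (io : {rmorphism F -> L}) (a : L), root (map_poly io f) a.
Proof.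
move=> fI fm; pose hI : monic_irreducible_poly f := (fI, fm).
exists {poly %/ f with hI}; exists (qfpoly_const hI); exists (in_qpoly f 'X).
apply/rootP.
have := in_qpoly_comp_horner f f 'X; rewrite comp_polyXr => <-.
apply: val_inj => /=.
by rewrite (mk_monicE hI) Pdiv.RingMonic.rmodpp.
Qed.

Lemma root_Xl (L : fieldType) (io : {rmorphism F -> L}) (f : {poly F}) (a : L) l :
  f %| 'X^l - 1 -> root (map_poly io f) a -> a ^+ l = 1.
Proof.
rewrite -(dvdp_map io) => /root_dvdp H /H.
by rewrite rmorphB /= map_polyXn rmorph1 /root !hornerE subr_eq0 => /eqP.
Qed.

Lemma caseA (l : nat) : prime l ->
  (exists j, (l %| ((p ^ k) ^ 2) ^ j + p ^ k)%N) ->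
  forall f : {poly F}, f \is monic -> irreducible_poly f ->
  f %| 'X^l - 1 -> SCRIM (p ^ k) f.
Proof.
move=> lp [j lj] f fm fI fd.
have [L [io [a fa]]] := ext_root fI fm.
have al := root_Xl fd fa.
have a0 : a != 0.
  apply/eqP => a0'; move: al; rewrite a0' expr0n eqn0Ngt prime_gt0 //=.
  by move/eqP; rewrite eq_sym oner_eq0.
have f0 : f`_0 != 0.
  apply: contraTneq fd => f00.
  have r0 : root f 0 by rewrite rootE horner_coef0 f00.
  apply/negP => /root_dvdp/(_ r0).
  by rewrite /root !hornerE expr0n eqn0Ngt prime_gt0 //= sub0r oppr_eq0 oner_eq0.
have dr := dagger_root f0 a0 fa.
have ge : a^-1 ^+ (p ^ k)%N = a ^+ (((p ^ k) ^ 2) ^ j)%N.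
  have h : a ^+ (((p ^ k) ^ 2) ^ j)%N * a ^+ (p ^ k)%N = 1.
    by rewrite -exprD; case/dvdnP: lj => t ->; rewrite mulnC exprM al expr1n.
  rewrite exprVn -[RHS]mulr1 -(mulfV (expf_neq0 (p ^ k)%N a0)) mulrA h mul1r.
  done.
have fd2 : f %| dagger_poly (p ^ k) f.
  by apply: (common_root_dvd fI _ dr); rewrite ge; exact: root_frobj.
have [sd md] := size_dagger fm f0.
have fe : f = dagger_poly (p ^ k) f.
  by apply/eqP; rewrite -eqp_monic // -dvdp_size_eqp // sd.
by split.
Qed.

Lemma caseB (l : nat) : prime l -> coprime l (p ^ k) ->
  ~ (exists j, (l %| ((p ^ k) ^ 2) ^ j + p ^ k)%N) ->
  forall f : {poly F}, SCRIM (p ^ k) f -> f %| 'X^l - 1 -> f = 'X - 1.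
Proof.
move=> lp lq nC f [fm fI f0 fe] fd.
case: (eqVneq f ('X - 1)) => // fne; exfalso.
have [L [io [a fa]]] := ext_root fI fm.
have al := root_Xl fd fa.
have a0 : a != 0.
  apply/eqP => a0'; move: al; rewrite a0' expr0n eqn0Ngt prime_gt0 //=.
  by move/eqP; rewrite eq_sym oner_eq0.
have a1 : a != 1.
  apply: contraNneq fne => a1'.
  have X1 : ('X - 1%:P : {poly F}) %| f.
    apply: (common_root_dvd (irredp_XsubC 1) _ fa).
    by rewrite map_polyXsubC rmorph1 root_XsubC a1'.
  have := fI.2 _ _ X1; rewrite size_XsubC => /(_ isT).
  by rewrite eqp_monic ?monicXsubC // polyC1 => /eqP <-.
have [m pm ml] := prim_order_exists (prime_gt0 lp) al.
have ml' : m = l.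
  case/primeP: lp => _ /(_ m ml) /orP [/eqP m1|/eqP //].
  by move: (prim_expr_order pm); rewrite m1 expr1 => /eqP; rewrite (negbTE a1).
subst m.
have dr := dagger_root f0 a0 fa; rewrite -fe in dr.
have [h [ha hg]] := orbit_poly io lp lq al.
have fh : f %| h := common_root_dvd fI fa ha.
have [j gj] := hg _ (root_dvdp (etrans (dvdp_map io f h) fh) dr).
apply: nC; exists j.
by rewrite (prim_order_dvd pm) exprD -gj exprVn mulVf ?expf_neq0.
Qed.

Lemma SCRIM_X1 : SCRIM (p ^ k) ('X - 1 : {poly F}).
Proof.
have e : ('X - 1 : {poly F}) = 'X - 1%:P by rewrite polyC1.
have c0 : ('X - 1 : {poly F})`_0 = -1 by rewrite coefB coefX coefC /= sub0r.
split.
- by rewrite e monicXsubC.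
- by rewrite e; exact: irredp_XsubC.
- by rewrite c0 oppr_eq0 oner_eq0.
have r : recip_poly ('X - 1 : {poly F}) = 'X - 1.
  have s2 : size ('X - 1 : {poly F}) = 2 by rewrite e size_XsubC.
  rewrite /recip_poly c0 s2.
  apply/polyP => i; rewrite coefZ coef_poly !coefB !coefX !coefC.
  by case: i => [|[|i]] //=; rewrite ?invrN1 ?subr0 ?sub0r ?mulrNN ?mulr1 ?mulr0.
have -> : dagger_poly (p ^ k) ('X - 1 : {poly F}) =
          map_poly (frob k hpF) (recip_poly ('X - 1)) by [].
by rewrite r rmorphB /= map_polyX rmorph1.
Qed.

End Abs.


Unset Implicit Arguments.

Theorem proposition2p3 (F : finFieldType) (p k q l : nat) :
  prime p -> (0 < k)%N -> q = (p ^ k)%N -> #|F| = (q ^ 2)%N ->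
  prime l -> odd l -> coprime l q ->
  (forall f : {poly F}, f \is monic -> irreducible_poly f ->
      f %| 'X^l - 1 -> SCRIM q f)
  \/
  (SCRIM q ('X - 1 : {poly F}) /\
   forall f : {poly F}, SCRIM q f -> f %| 'X^l - 1 -> f = 'X - 1).
Proof.
move=> pp k0 -> cardF lp _ lq.
have [C|nC] := classic (exists j, (l %| ((p ^ k) ^ 2) ^ j + p ^ k)%N).
  by left; move=> f fm fI fd; exact: (caseA pp k0 cardF lp C).
right; split; first exact: (SCRIM_X1 pp cardF).
by move=> f fS fd; exact: (caseB pp k0 cardF lp lq nC).
Qed.
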